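(* Assume that for every nonempty $T\subseteq\mathbb{S}$ and every $i\in T$, the equilibrium demand satisfies $\bar q_i(T)<1/2$. If some set maximizing $\overline{re}$ over nonempty subsets of $\mathbb{S}$ has cardinality $k^*\ge2$, then $\{1,2,\dots,k^*\}$ also maximizes $\overline{re}$ over nonempty subsets of $\mathbb{S}$.
   Context: Market model: sellers $\mathbb{S}=\{1,\dots,n\}$, product qualities $\theta_1\ge\dots\ge\theta_n\ge0$. For displayed set $S$ and prices $p_i\ge0$: $a_i=e^{\theta_i-p_i}$, MNL demand $q_i=a_i/(1+\sum_{j\in S}a_j)$; sellers in $S$ play the Bertrand game (seller $i$ chooses $p_i\ge0$ to maximize $p_iq_i$). $V:(0,\infty)\to(0,1)$: $V(x)=$ the unique $v\in(0,1)$ with $v\exp(v/(1-v))=x$. For nonempty $T$, $\bar q_0(T)\in(0,1)$ is the unique solution of $\sum_{i\in T}V(\bar q_0e^{\theta_i-1})=1-\bar q_0$, $\bar q_i(T)=V(\bar q_0(T)e^{\theta_i-1})$ are the equilibrium demands, and the equilibrium revenue is $\overline{re}(T)=\sum_{i\in T}\frac{\bar q_i(T)}{1-\bar q_i(T)}$. *)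

(* Defs.v *)
From Stdlib Require Import Reals Lra List ClassicalEpsilon.
Open Scope R_scope.

Definition Vfun (x : R) : R :=
  epsilon (inhabits 0) (fun v => 0 < v < 1 /\ v * exp (v / (1 - v)) = x).

Definition sumL (T : list nat) (f : nat -> R) : R :=
  fold_right (fun i acc => f i + acc) 0 T.

Definition q0bar (theta : nat -> R) (T : list nat) : R :=
  epsilon (inhabits 0)
    (fun q => 0 < q < 1 /\ sumL T (fun i => Vfun (q * exp (theta i - 1))) = 1 - q).

Definition qbar (theta : nat -> R) (T : list nat) (i : nat) : R :=
  Vfun (q0bar theta T * exp (theta i - 1)).

Definition rebar (theta : nat -> R) (T : list nat) : R :=
  sumL T (fun i => qbar theta T i / (1 - qbar theta T i)).

(* Nonempty subsets of {1..n}, represented as duplicate-free nonempty lists. *)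
Definition nonempty_subset (n : nat) (T : list nat) : Prop :=
  NoDup T /\ T <> nil /\ (forall i, In i T -> (1 <= i <= n)%nat).

Definition is_maximizer (n : nat) (theta : nat -> R) (T : list nat) : Prop :=
  nonempty_subset n T /\
  forall T', nonempty_subset n T' -> rebar theta T' <= rebar theta T.

(* Main.v *)
Require Import Defs.
From Stdlib Require Import Reals List Lra Permutation ClassicalEpsilon Ranalysis5 Arith Lia.
From Coquelicot Require Import Coquelicot.
Open Scope R_scope.

Definition fv (v : R) : R := v * exp (v / (1 - v)).
Definition dfv (v : R) : R := exp (v / (1 - v)) * (1 + v / (1 - v) ^ 2).

Lemma fv_der v : v < 1 -> is_derive fv v (dfv v).
Proof.
  intros Hv. unfold fv, dfv. auto_derive.
  - lra.
  - replace (1 + - v) with (1 - v) by ring. unfold Rdiv.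
    set (e := exp (v * / (1 - v))). field. lra.
Qed.

Lemma frac_lt v1 v2 : v1 < v2 < 1 -> v1 / (1 - v1) < v2 / (1 - v2).
Proof.
  intros H.
  replace (v1 / (1 - v1)) with (/ (1 - v1) - 1) by (field; lra).
  replace (v2 / (1 - v2)) with (/ (1 - v2) - 1) by (field; lra).
  assert (/ (1 - v1) < / (1 - v2)) by (apply Rinv_lt_contravar; nra).
  lra.
Qed.

Lemma fv_lt v1 v2 : 0 <= v1 -> v1 < v2 -> v2 < 1 -> fv v1 < fv v2.
Proof.
  intros H1 H2 H3. unfold fv.
  assert (E : exp (v1 / (1 - v1)) < exp (v2 / (1 - v2)))
    by (apply exp_increasing, frac_lt; lra).
  assert (0 < exp (v1 / (1 - v1))) by apply exp_pos.
  nra.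
Qed.

Lemma fv_ge v : 0 <= v < 1 -> v / (1 - v) <= fv v.
Proof.
  intros H. unfold fv.
  assert (1 + v / (1 - v) <= exp (v / (1 - v))) by apply exp_ineq1_le.
  replace (v / (1 - v)) with (v * (1 + v / (1 - v))) at 1 by (field; lra).
  nra.
Qed.

Lemma fv_ge_id v : 0 <= v < 1 -> v <= fv v.
Proof.
  intros H. eapply Rle_trans; [|apply fv_ge; auto].
  unfold Rdiv. assert (1 <= / (1 - v)).
  { rewrite <- Rinv_1. apply Rinv_le_contravar; lra. }
  nra.
Qed.

Lemma fv_le3 v : 0 <= v <= 1/2 -> fv v <= 3 * v.
Proof.
  intros H. unfold fv.
  assert (v / (1 - v) <= 1).
  { apply Rmult_le_reg_r with (1 - v). lra. field_simplify; lra. }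
  assert (exp (v / (1 - v)) <= exp 1).
  { destruct (Req_dec (v/(1-v)) 1) as [E|E]. rewrite E; lra.
    left. apply exp_increasing; lra. }
  assert (exp 1 <= 3) by (pose proof exp_le_3; lra).
  assert (0 < exp (v / (1 - v))) by apply exp_pos.
  nra.
Qed.

Lemma der_cont f x l : is_derive f x l -> continuity_pt f x.
Proof. intros H. apply derivable_continuous_pt. exists l. apply is_derive_Reals; auto. Qed.

Lemma fv_cont v : v < 1 -> continuity_pt fv v.
Proof. intros H. eapply der_cont. apply fv_der; auto. Qed.

Lemma fv_exists x : 0 < x -> exists v, 0 < v < 1 /\ fv v = x.
Proof.
  intros Hx.
  set (a := Rmin (1/4) (x / 4)).
  set (b := x / (1 + x)).
  assert (Ha : 0 < a) by (unfold a; apply Rmin_glb_lt; lra).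
  assert (Ha2 : a <= 1/4) by apply Rmin_l.
  assert (Ha3 : a <= x/4) by apply Rmin_r.
  assert (Hb : 0 < b < 1).
  { unfold b. split. apply Rdiv_lt_0_compat; lra.
    apply Rmult_lt_reg_r with (1 + x). lra. field_simplify; lra. }
  assert (Hfa : fv a < x) by (pose proof (fv_le3 a); lra).
  assert (Hfb : x < fv b).
  { assert (b / (1 - b) = x) by (unfold b; field; lra).
    unfold fv. assert (1 + b / (1 - b) < exp (b / (1 - b))) by (apply exp_ineq1; lra).
    replace x with (b * (1 + b / (1 - b))) at 1 by (rewrite H; unfold b; field; lra).
    nra. }
  assert (Hab : a < b).
  { destruct (Rlt_or_le a b) as [|Hle]; auto.
    exfalso. pose proof (fv_lt b a). 
    destruct (Req_dec a b) as [E|E]. rewrite E in Hfa; lra.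
    assert (fv b < fv a) by (apply fv_lt; lra). lra. }
  destruct (Ranalysis5.IVT_interv (fun v => fv v - x) a b) as [z [Hz1 Hz2]].
  - intros c Hc. apply continuity_pt_minus. apply fv_cont; lra. apply continuity_pt_const.
    intros u w; auto.
  - auto.
  - lra.
  - lra.
  - exists z. split. lra. lra.
Qed.

Lemma V_spec x : 0 < x -> 0 < Vfun x < 1 /\ fv (Vfun x) = x.
Proof.
  intros Hx. unfold Vfun.
  apply (epsilon_spec (inhabits 0) (fun v => 0 < v < 1 /\ v * exp (v / (1 - v)) = x)).
  apply fv_exists; auto.
Qed.

Lemma fv_inj v w : 0 <= v < 1 -> 0 <= w < 1 -> fv v = fv w -> v = w.
Proof.
  intros Hv Hw E. destruct (Rtotal_order v w) as [L|[L|L]]; auto.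
  - pose proof (fv_lt v w); lra.
  - pose proof (fv_lt w v); lra.
Qed.

Lemma V_unique x v : 0 < v < 1 -> fv v = x -> Vfun x = v.
Proof.
  intros Hv E. assert (0 < x) by (pose proof (fv_ge_id v); lra).
  destruct (V_spec x H). apply fv_inj; lra.
Qed.

Lemma V_pos x : 0 < x -> 0 < Vfun x. Proof. intros; apply V_spec; auto. Qed.
Lemma V_lt1 x : 0 < x -> Vfun x < 1. Proof. intros; apply V_spec; auto. Qed.
Lemma V_fv x : 0 < x -> fv (Vfun x) = x. Proof. intros; apply V_spec; auto. Qed.

Lemma V_lt x y : 0 < x -> x < y -> Vfun x < Vfun y.
Proof.
  intros Hx Hxy. pose proof (V_spec x Hx). pose proof (V_spec y ltac:(lra)).
  destruct (Rlt_or_le (Vfun x) (Vfun y)) as [|L]; auto.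
  destruct (Req_dec (Vfun x) (Vfun y)) as [E|E].
  - assert (fv (Vfun x) = fv (Vfun y)) by (rewrite E; auto). lra.
  - assert (fv (Vfun y) < fv (Vfun x)) by (apply fv_lt; lra). lra.
Qed.

Lemma V_le x y : 0 < x -> x <= y -> Vfun x <= Vfun y.
Proof. intros. destruct (Req_dec x y). subst; lra. left; apply V_lt; lra. Qed.

Lemma V_le_id x : 0 < x -> Vfun x <= x.
Proof. intros Hx. pose proof (V_spec x Hx). pose proof (fv_ge_id (Vfun x)). lra. Qed.
Lemma dfv_pos v : 0 <= v < 1 -> 0 < dfv v.
Proof.
  intros H. unfold dfv. apply Rmult_lt_0_compat. apply exp_pos.
  assert (0 <= v / (1 - v) ^ 2). { apply Rdiv_le_0_compat; nra. } lra.
Qed.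

Lemma V_cont y : 0 < y -> continuity_pt Vfun y.
Proof.
  intros Hy. pose proof (V_spec y Hy) as [Hv Hf].
  set (lb := Vfun y / 2). set (ub := (1 + Vfun y) / 2).
  assert (Hlb : 0 < lb) by (unfold lb; lra).
  assert (Hub : ub < 1) by (unfold ub; lra).
  assert (Hlb1 : lb < 1) by (unfold lb; lra).
  assert (Hflb : 0 < fv lb) by (pose proof (fv_ge_id lb ltac:(lra)); lra).
  apply (continuity_pt_recip_interv fv Vfun lb ub).
  - unfold lb, ub; lra.
  - intros a b Ha Hab Hb. apply fv_lt; lra.
  - intros x H1 H2. unfold comp, id. apply V_fv. lra.
  - intros x H1 H2.
    assert (E1 : Vfun (fv lb) = lb) by (apply V_unique; auto; lra).
    assert (E2 : Vfun (fv ub) = ub) by (apply V_unique; auto; unfold ub, lb in *; lra).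
    split.
    + rewrite <- E1. apply V_le; lra.
    + rewrite <- E2. apply V_le; lra.
  - intros a Ha. apply fv_cont. lra.
  - rewrite <- Hf. split; apply fv_lt; unfold lb, ub; lra.
Qed.

Lemma V_der y : 0 < y -> is_derive Vfun y (1 / dfv (Vfun y)).
Proof.
  intros Hy.
  assert (Prf : forall a, Vfun (y/2) <= a <= Vfun (2*y) -> derivable_pt fv a).
  { intros a Ha. pose proof (V_spec (y/2) ltac:(lra)). pose proof (V_spec (2*y) ltac:(lra)).
    exists (dfv a). apply is_derive_Reals. apply fv_der. lra. }
  assert (Hin : Vfun (y/2) <= Vfun y <= Vfun (2*y)) by (split; apply V_le; lra).
  apply is_derive_Reals.
  pose proof (derivable_pt_lim_recip_interv fv Vfun (y/2) (2*y) y Prf (V_cont y Hy)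
    ltac:(lra) ltac:(lra) Hin) as L.
  assert (D : derive_pt fv (Vfun y) (Prf (Vfun y) Hin) = dfv (Vfun y)).
  { apply derive_pt_eq_0. apply is_derive_Reals. apply fv_der. apply V_spec; auto. }
  rewrite D in L. apply L.
  - intros x Hx. unfold comp, id. apply V_fv. lra.
  - pose proof (dfv_pos (Vfun y)). pose proof (V_spec y Hy). lra.
Qed.
Definition Dq (q : R) := 1 - q + q ^ 2.
Definition hq (q : R) := q * (1 - q) ^ 2 / Dq q.
Definition kq (q : R) := q / Dq q.
Definition gq (q : R) := q / (1 - q).
Definition dgq (q : R) := 1 / (1 - q) ^ 2.
Definition dkq (q : R) := (1 - q ^ 2) / Dq q ^ 2.
Definition dhq (q : R) :=
  ((1 - 4*q + 3*q^2) * Dq q - (q - 2*q^2 + q^3) * (2*q - 1)) / Dq q ^ 2.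

Lemma Dq_pos q : 0 < Dq q.
Proof. unfold Dq. nra. Qed.

Lemma gq_der q : q <> 1 -> is_derive gq q (dgq q).
Proof. intros H. unfold gq, dgq. auto_derive. lra. field. lra. Qed.

Lemma kq_der q : is_derive kq q (dkq q).
Proof.
  pose proof (Dq_pos q). unfold kq, dkq. unfold Dq in *. auto_derive. lra.
  field. lra.
Qed.

Lemma hq_der q : is_derive hq q (dhq q).
Proof.
  pose proof (Dq_pos q). unfold hq, dhq. unfold Dq in *. auto_derive. lra.
  field. lra.
Qed.

Lemma is_derive_mult' f g x df dg : is_derive f x df -> is_derive g x dg ->
  is_derive (fun t => f t * g t) x (df * g x + f x * dg).
Proof.
  intros Hf Hg. apply is_derive_Reals. apply is_derive_Reals in Hf. apply is_derive_Reals in Hg.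
  exact (derivable_pt_lim_mult f g x df dg Hf Hg).
Qed.

Lemma is_derive_plus' f g x df dg : is_derive f x df -> is_derive g x dg ->
  is_derive (fun t => f t + g t) x (df + dg).
Proof.
  intros Hf Hg. apply is_derive_Reals. apply is_derive_Reals in Hf. apply is_derive_Reals in Hg.
  exact (derivable_pt_lim_plus f g x df dg Hf Hg).
Qed.

Lemma is_derive_eq (f : R -> R) (x d1 d2 : R) : is_derive f x d1 -> d1 = d2 -> is_derive f x d2.
Proof. intros H E; subst; auto. Qed.

Lemma is_derive_ext' (f g : R -> R) x d : (forall t, f t = g t) -> is_derive f x d -> is_derive g x d.
Proof. intros E H. apply is_derive_Reals. apply is_derive_Reals in H.
  apply (derivable_pt_lim_ext f g x d); auto. Qed.

Lemma Va_der a x : 0 < a -> 0 < x ->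
  is_derive (fun t => Vfun (t * a)) x (hq (Vfun (x * a)) / x).
Proof.
  intros Ha Hx.
  assert (Hxa : 0 < x * a) by nra.
  pose proof (V_spec (x*a) Hxa) as [Hq Hf].
  eapply is_derive_eq.
  - apply (is_derive_comp Vfun (fun t => t * a) x).
    + apply V_der; auto.
    + auto_derive; auto.
  - set (q := Vfun (x * a)) in *. unfold fv in Hf. unfold scal; simpl. unfold mult; simpl.
    unfold dfv, hq, Dq. set (e := exp (q / (1 - q))) in *.
    assert (0 < e) by apply exp_pos.
    replace a with (q * e / x) by (field_simplify; [rewrite Hf; field|]; lra).
    assert (0 < q / (1 - q)^2) by (apply Rdiv_lt_0_compat; nra).
    field. repeat split; try lra; nra.
Qed.
Lemma phiV_der (phi dphi : R -> R) a x : 0 < a -> 0 < x ->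
  (forall q, 0 < q < 1 -> is_derive phi q (dphi q)) ->
  is_derive (fun t => phi (Vfun (t * a))) x (dphi (Vfun (x * a)) * (hq (Vfun (x * a)) / x)).
Proof.
  intros Ha Hx Hd. eapply is_derive_eq.
  - apply (is_derive_comp phi (fun t => Vfun (t * a)) x).
    + apply Hd. apply V_spec. nra.
    + apply Va_der; auto.
  - unfold scal; simpl; unfold mult; simpl. ring.
Qed.

Lemma sumL_nil f : sumL nil f = 0. Proof. reflexivity. Qed.
Lemma sumL_cons i S f : sumL (i :: S) f = f i + sumL S f. Proof. reflexivity. Qed.

Lemma sumL_der (S : list nat) (F : nat -> R -> R) (F' : nat -> R) (x : R) :
  (forall i, In i S -> is_derive (F i) x (F' i)) ->
  is_derive (fun y => sumL S (fun i => F i y)) x (sumL S F').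
Proof.
  induction S as [|j S IH]; intros H.
  - simpl. apply is_derive_Reals. apply derivable_pt_lim_const.
  - simpl. apply is_derive_plus'. apply H; simpl; auto. apply IH. intros; apply H; simpl; auto.
Qed.

Lemma sumL_ext S f g : (forall i, In i S -> f i = g i) -> sumL S f = sumL S g.
Proof.
  induction S as [|j S IH]; intros H; simpl; auto.
  rewrite H by (simpl; auto). rewrite IH; auto. intros; apply H; simpl; auto.
Qed.

Lemma sumL_le S f g : (forall i, In i S -> f i <= g i) -> sumL S f <= sumL S g.
Proof.
  induction S as [|j S IH]; intros H; simpl. lra.
  assert (f j <= g j) by (apply H; simpl; auto).
  assert (sumL S f <= sumL S g) by (apply IH; intros; apply H; simpl; auto). lra.
Qed.

Lemma sumL_lt S f g : S <> nil -> (forall i, In i S -> f i < g i) -> sumL S f < sumL S g.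
Proof.
  induction S as [|j S IH]; intros Hn H; simpl. congruence.
  assert (f j < g j) by (apply H; simpl; auto).
  destruct S as [|k S'].
  - simpl. lra.
  - assert (sumL (k :: S') f < sumL (k :: S') g) by (apply IH; [congruence| intros; apply H; simpl in *; tauto]).
    simpl in *. lra.
Qed.

Lemma sumL_scal S c f : sumL S (fun i => c * f i) = c * sumL S f.
Proof. induction S as [|j S IH]; simpl. ring. rewrite IH. ring. Qed.

Lemma sumL_plus S f g : sumL S (fun i => f i + g i) = sumL S f + sumL S g.
Proof. induction S as [|j S IH]; simpl. ring. rewrite IH. ring. Qed.

Lemma sumL_perm S S' f : Permutation S S' -> sumL S f = sumL S' f.
Proof.
  intros P. induction P; simpl; auto; try lra.
Qed.

Lemma sumL_app S S' f : sumL (S ++ S') f = sumL S f + sumL S' f.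
Proof. induction S as [|j S IH]; simpl. ring. rewrite IH. ring. Qed.

Lemma sumL_zero (T : list nat) : sumL T (fun _ => 0) = 0.
Proof. induction T; simpl; auto. rewrite IHT. ring. Qed.

Lemma sumL_nonneg (T : list nat) f : (forall i, In i T -> 0 <= f i) -> 0 <= sumL T f.
Proof. intros H. rewrite <- (sumL_zero T). apply sumL_le; auto. Qed.

Section Analysis.
Variable S : list nat.
Variable A : nat -> R.
Hypothesis Apos : forall i, 0 < A i.

Definition qf i x := Vfun (x * A i).
Definition Pf x := x + sumL S (fun i => qf i x).
Definition Hf x := x + sumL S (fun i => hq (qf i x)).
Definition Kf x := sumL S (fun i => kq (qf i x)).
Definition K1f x := sumL S (fun i => dkq (qf i x) * hq (qf i x)).
Definition H1f x := x + sumL S (fun i => dhq (qf i x) * hq (qf i x)).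
Definition Gf x := sumL S (fun i => gq (qf i x)) + gq (1 - Pf x).
Definition Phi x := Pf x * Pf x * Kf x / Hf x.
Definition dGf x := (Kf x - Hf x / (Pf x * Pf x)) / x.
Definition dPhi x := (((Hf x / x * Pf x + Pf x * (Hf x / x)) * Kf x + (Pf x * Pf x) * (K1f x / x)) * Hf x
                      - (Pf x * Pf x * Kf x) * (H1f x / x)) / Hf x ^ 2.

Lemma qf_bounds i x : 0 < x -> 0 < qf i x < 1.
Proof. intros. unfold qf. apply V_spec. pose proof (Apos i). nra. Qed.

Lemma hq_nonneg q : 0 < q < 1 -> 0 <= hq q.
Proof. intros. unfold hq. pose proof (Dq_pos q). apply Rdiv_le_0_compat; [apply Rmult_le_pos; [lra|apply pow2_ge_0]|lra]. Qed.
Lemma kq_nonneg q : 0 < q < 1 -> 0 <= kq q.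
Proof. intros. unfold kq. pose proof (Dq_pos q). apply Rdiv_le_0_compat; lra. Qed.

Lemma gen_sum_der (phi dphi : R -> R) x : 0 < x ->
  (forall q, 0 < q < 1 -> is_derive phi q (dphi q)) ->
  is_derive (fun t => sumL S (fun i => phi (qf i t))) x
    (sumL S (fun i => dphi (qf i x) * hq (qf i x)) / x).
Proof.
  intros Hx Hd. eapply is_derive_eq.
  - apply (sumL_der S (fun i t => phi (qf i t)) (fun i => dphi (qf i x) * (hq (qf i x) / x))).
    intros i _. unfold qf. apply phiV_der; auto.
  - unfold Rdiv. rewrite Rmult_comm, <- sumL_scal. apply sumL_ext. intros; ring.
Qed.

Lemma id_der (x : R) : is_derive (fun t : R => t) x 1.
Proof. apply is_derive_Reals. apply derivable_pt_lim_id. Qed.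

Lemma Pf_der x : 0 < x -> is_derive Pf x (Hf x / x).
Proof.
  intros Hx. eapply is_derive_eq.
  - apply is_derive_plus'. apply id_der. apply (gen_sum_der (fun q => q) (fun _ => 1)); auto.
    intros; apply id_der.
  - unfold Hf. rewrite (sumL_ext S (fun i => 1 * hq (qf i x)) (fun i => hq (qf i x))).
    match goal with |- ?a = ?b => change (@eq R a b) end. field; lra. intros; ring.
Qed.

Lemma Hf_der x : 0 < x -> is_derive Hf x (H1f x / x).
Proof.
  intros Hx. eapply is_derive_eq.
  - apply is_derive_plus'. apply id_der. apply (gen_sum_der hq dhq); auto.
    intros; apply hq_der.
  - unfold H1f. field. lra.
Qed.

Lemma Kf_der x : 0 < x -> is_derive Kf x (K1f x / x).
Proof.
  intros Hx. apply (gen_sum_der kq dkq); auto. intros; apply kq_der.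
Qed.

Lemma Pf_pos x : 0 < x -> 0 < Pf x.
Proof.
  intros Hx. unfold Pf. assert (0 <= sumL S (fun i => qf i x)).
  { apply sumL_nonneg. intros. pose proof (qf_bounds i x Hx). lra. }
  lra.
Qed.

Lemma Hf_pos x : 0 < x -> 0 < Hf x.
Proof.
  intros Hx. unfold Hf. assert (0 <= sumL S (fun i => hq (qf i x))).
  { apply sumL_nonneg. intros. apply hq_nonneg, qf_bounds; auto. }
  lra.
Qed.

Lemma Kf_nonneg x : 0 < x -> 0 <= Kf x.
Proof. intros Hx. apply sumL_nonneg. intros. apply kq_nonneg, qf_bounds; auto. Qed.

Lemma dgq_hq q : 0 < q < 1 -> dgq q * hq q = kq q.
Proof. intros. unfold dgq, hq, kq. pose proof (Dq_pos q). field. split; lra. Qed.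

Lemma Gf_der x : 0 < x -> is_derive Gf x (dGf x).
Proof.
  intros Hx. pose proof (Pf_pos x Hx). pose proof (Hf_pos x Hx).
  eapply is_derive_eq.
  - apply is_derive_plus'.
    + apply (gen_sum_der gq dgq); auto. intros; apply gq_der; lra.
    + apply (is_derive_comp gq (fun t => 1 - Pf t) x).
      * apply gq_der. lra.
      * apply is_derive_Reals. apply derivable_pt_lim_minus.
        apply derivable_pt_lim_const. apply is_derive_Reals. apply Pf_der; auto.
  - unfold scal; simpl; unfold mult; simpl. unfold dGf, Kf.
    rewrite (sumL_ext S (fun i => dgq (qf i x) * hq (qf i x)) (fun i => kq (qf i x))).
    + unfold dgq. field. repeat split; lra.
    + intros. apply dgq_hq, qf_bounds; auto.
Qed.

Lemma Phi_der x : 0 < x -> is_derive Phi x (dPhi x).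
Proof.
  intros Hx. pose proof (Pf_pos x Hx). pose proof (Hf_pos x Hx).
  unfold Phi, dPhi.
  apply (is_derive_div (fun t => Pf t * Pf t * Kf t) Hf).
  - apply (is_derive_mult' (fun t => Pf t * Pf t) Kf).
    apply (is_derive_mult' Pf Pf). apply Pf_der; auto. apply Pf_der; auto.
    apply Kf_der; auto.
  - apply Hf_der; auto.
  - lra.
Qed.


Lemma hq_ge q : 0 < q <= 1/2 -> q / 3 <= hq q.
Proof.
  intros Hq. pose proof (Dq_pos q).
  replace (hq q) with (q / 3 + q * (2 - q) * (1 - 2 * q) / (3 * Dq q)).
  - assert (0 <= q * (2 - q) * (1 - 2 * q) / (3 * Dq q)).
    { apply Rdiv_le_0_compat; [|lra]. apply Rmult_le_pos; [|lra]. apply Rmult_le_pos; lra. }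
    lra.
  - unfold hq. unfold Dq in *. field. lra.
Qed.

Lemma dkq_ge q : 0 < q <= 1/2 -> kq q / 3 <= dkq q * hq q.
Proof.
  intros Hq. pose proof (Dq_pos q).
  replace (dkq q * hq q) with (kq q / 3 + q * (1 - 2*q) * (2*q^3 - 3*q^2 + 2) / (3 * Dq q ^ 3)).
  - assert (0 <= q * (1 - 2*q) * (2*q^3 - 3*q^2 + 2) / (3 * Dq q ^ 3)).
    { apply Rdiv_le_0_compat.
      - apply Rmult_le_pos; [apply Rmult_le_pos; lra|]. nra.
      - assert (0 < Dq q ^ 3) by (apply pow_lt; lra). lra. }
    lra.
  - unfold dkq, hq, kq. unfold Dq in *. field. lra.
Qed.

Lemma dhq_le q : 0 < q < 1 -> dhq q <= 1.
Proof.
  intros Hq. pose proof (Dq_pos q).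
  replace (dhq q) with (1 - q * (2 - q) / Dq q ^ 2).
  - assert (0 <= q * (2 - q) / Dq q ^ 2).
    { apply Rdiv_le_0_compat. nra. assert (0 < Dq q ^ 2) by (apply pow_lt; lra). lra. }
    lra.
  - unfold dhq. unfold Dq in *. field. lra.
Qed.

Lemma dPhi_alg P H K K1 H1 x : 0 < x -> 0 < P -> 0 < H -> 0 <= K -> K / 3 <= K1 ->
  H1 <= H -> P / 3 <= H ->
  0 <= (((H / x * P + P * (H / x)) * K + (P * P) * (K1 / x)) * H - (P * P * K) * (H1 / x)) / H ^ 2.
Proof.
  intros Hx HP HH HK HK1 HH1 HPH.
  replace ((((H / x * P + P * (H / x)) * K + (P * P) * (K1 / x)) * H - (P * P * K) * (H1 / x)) / H ^ 2)
    with ((2 * P * H * K * H + P * P * K1 * H - P * P * K * H1) / (x * H ^ 2)) by (field; lra).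
  apply Rdiv_le_0_compat; [|apply Rmult_lt_0_compat; [lra|apply pow_lt; lra]].
  assert (A1 : P * P * (K / 3) * H <= P * P * K1 * H).
  { apply Rmult_le_compat_r; [lra|]. apply Rmult_le_compat_l; nra. }
  assert (A2 : P * P * K * H1 <= P * P * K * H).
  { apply Rmult_le_compat_l; nra. }
  assert (A3 : 0 <= 2 * P * H * K * (H - P / 3)).
  { apply Rmult_le_pos; [|lra]. apply Rmult_le_pos; [|lra]. nra. }
  nra.
Qed.

Lemma dPhi_nonneg x : 0 < x -> (forall i, In i S -> qf i x < 1/2) -> 0 <= dPhi x.
Proof.
  intros Hx Hh. unfold dPhi.
  apply dPhi_alg; auto.
  - apply Pf_pos; auto.
  - apply Hf_pos; auto.
  - apply Kf_nonneg; auto.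
  - unfold K1f, Kf. unfold Rdiv at 1. rewrite Rmult_comm, <- sumL_scal.
    apply sumL_le. intros i Hi. pose proof (qf_bounds i x Hx). pose proof (Hh i Hi).
    pose proof (dkq_ge (qf i x)). lra.
  - unfold H1f, Hf. apply Rplus_le_compat_l. apply sumL_le. intros i Hi.
    pose proof (qf_bounds i x Hx). pose proof (dhq_le (qf i x) H).
    pose proof (hq_nonneg (qf i x) H). nra.
  - unfold Pf, Hf. 
    assert (sumL S (fun i => qf i x) / 3 <= sumL S (fun i => hq (qf i x))).
    { unfold Rdiv at 1. rewrite Rmult_comm, <- sumL_scal.
      apply sumL_le. intros i Hi. pose proof (qf_bounds i x Hx). pose proof (Hh i Hi).
      pose proof (hq_ge (qf i x)). lra. }
    lra.
Qed.

Lemma dGf_pos x : 0 < x -> 0 < dGf x -> 1 < Phi x.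
Proof.
  intros Hx H. pose proof (Pf_pos x Hx). pose proof (Hf_pos x Hx).
  unfold dGf, Phi in *.
  assert (0 < Kf x - Hf x / (Pf x * Pf x)).
  { apply Rmult_lt_reg_r with (/ x). apply Rinv_0_lt_compat; lra. rewrite Rmult_0_l. exact H. }
  assert (Hf x < Pf x * Pf x * Kf x).
  { assert (Hf x / (Pf x * Pf x) < Kf x) by lra.
    apply Rmult_lt_compat_l with (r := Pf x * Pf x) in H3; [|nra].
    replace (Pf x * Pf x * (Hf x / (Pf x * Pf x))) with (Hf x) in H3 by (field; lra). lra. }
  apply Rmult_lt_reg_r with (Hf x); auto.
  replace (Pf x * Pf x * Kf x / Hf x * Hf x) with (Pf x * Pf x * Kf x) by (field; lra). lra.
Qed.

Lemma Phi_dGf x : 0 < x -> 1 < Phi x -> 0 < dGf x.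
Proof.
  intros Hx H. pose proof (Pf_pos x Hx). pose proof (Hf_pos x Hx).
  unfold dGf, Phi in *.
  assert (Hf x < Pf x * Pf x * Kf x).
  { apply Rmult_lt_compat_r with (r := Hf x) in H; auto.
    replace (Pf x * Pf x * Kf x / Hf x * Hf x) with (Pf x * Pf x * Kf x) in H by (field; lra). lra. }
  apply Rdiv_lt_0_compat; auto.
  assert (Hf x / (Pf x * Pf x) < Kf x).
  { apply Rmult_lt_reg_r with (Pf x * Pf x). nra.
    replace (Hf x / (Pf x * Pf x) * (Pf x * Pf x)) with (Hf x) by (field; lra). lra. }
  lra.
Qed.


Lemma MVT' (f df : R -> R) a b : a < b -> (forall x, a <= x <= b -> is_derive f x (df x)) ->
  exists c, a <= c <= b /\ f b - f a = df c * (b - a).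
Proof.
  intros Hab Hd. pose proof (MVT_gen f a b df) as M. simpl in M.
  rewrite Rmin_left, Rmax_right in M by lra.
  destruct M as [c [Hc E]].
  - intros; apply Hd; lra.
  - intros. eapply der_cont. apply Hd; lra.
  - exists c; auto.
Qed.

Lemma qf_le i x y : 0 < x -> x <= y -> qf i x <= qf i y.
Proof. intros. unfold qf. pose proof (Apos i). apply V_le; nra. Qed.

Lemma key_analytic X xi xj : 0 < xi -> xi <= xj -> xj < X ->
  (forall i, In i S -> qf i X < 1/2) -> Gf X <= Gf xj -> Gf xj <= Gf xi.
Proof.
  intros Hxi Hij HjX Hh HG.
  destruct (Rle_or_lt (Gf xj) (Gf xi)) as [|Hlt]; auto. exfalso.
  assert (Hij' : xi < xj).
  { destruct (Req_dec xi xj) as [E|E]; [subst; lra|lra]. }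
  destruct (MVT' Gf dGf xi xj Hij') as [c [Hc Ec]].
  { intros; apply Gf_der; lra. }
  assert (Hdc : 0 < dGf c).
  { destruct (Rle_or_lt (dGf c) 0); auto. assert (dGf c * (xj - xi) <= 0) by nra. lra. }
  apply dGf_pos in Hdc; [|lra].
  destruct (MVT' Gf dGf xj X HjX) as [d [Hd Ed]].
  { intros; apply Gf_der; lra. }
  assert (Hpd : Phi c <= Phi d).
  { destruct (Req_dec c d) as [E|E]; [subst; lra|].
    destruct (MVT' Phi dPhi c d ltac:(lra)) as [e [He Ee]].
    { intros; apply Phi_der; lra. }
    assert (0 <= dPhi e).
    { apply dPhi_nonneg; [lra|]. intros i Hi. pose proof (qf_le i e X ltac:(lra) ltac:(lra)).
      pose proof (Hh i Hi). lra. }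
    nra. }
  assert (0 < dGf d) by (apply Phi_dGf; lra).
  nra.
Qed.

End Analysis.
Definition Ath (theta : nat -> R) (i : nat) := exp (theta i - 1).

Lemma Ath_pos theta i : 0 < Ath theta i.
Proof. apply exp_pos. Qed.

Lemma Pf_le T A x y : (forall i, 0 < A i) -> 0 < x -> x <= y -> Pf T A x <= Pf T A y.
Proof.
  intros HA Hx Hxy. unfold Pf. assert (sumL T (fun i => qf A i x) <= sumL T (fun i => qf A i y)).
  { apply sumL_le. intros. apply qf_le; auto. }
  lra.
Qed.

Lemma Pf_lt T A x y : (forall i, 0 < A i) -> 0 < x -> x < y -> Pf T A x < Pf T A y.
Proof.
  intros HA Hx Hxy. unfold Pf. assert (sumL T (fun i => qf A i x) <= sumL T (fun i => qf A i y)).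
  { apply sumL_le. intros. apply qf_le; auto; lra. }
  lra.
Qed.

Lemma Pf_cont T A x : (forall i, 0 < A i) -> 0 < x -> continuity_pt (Pf T A) x.
Proof. intros. eapply der_cont. apply Pf_der; auto. Qed.

Lemma q0_exists theta T : T <> nil ->
  exists q, 0 < q < 1 /\ sumL T (fun i => Vfun (q * exp (theta i - 1))) = 1 - q.
Proof.
  intros HT. set (A := Ath theta). assert (HA : forall i, 0 < A i) by (intros; apply Ath_pos).
  destruct T as [|j T']; [congruence|].
  set (T := j :: T').
  set (sA := sumL T A).
  assert (HsA : 0 <= sA) by (apply sumL_nonneg; intros; left; auto).
  set (lo := 1 / (2 * (1 + sA))).
  assert (Hlo : 0 < lo) by (unfold lo; apply Rdiv_lt_0_compat; lra).
  assert (Hlo2 : lo <= 1/2).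
  { unfold lo. apply Rmult_le_reg_r with (2 * (1 + sA)). lra. field_simplify; lra. }
  set (c := Vfun (A j / 2)).
  assert (Hc : 0 < c < 1) by (apply V_spec; pose proof (HA j); lra).
  set (m := Rmin (1/2) c).
  assert (Hm : 0 < m <= 1/2) by (unfold m; split; [apply Rmin_glb_lt; lra| apply Rmin_l]).
  assert (Hmc : m <= c) by apply Rmin_r.
  set (hi := 1 - m / 2).
  assert (Pflo : Pf T A lo < 1).
  { unfold Pf. assert (sumL T (fun i => qf A i lo) <= sumL T (fun i => lo * A i)).
    { apply sumL_le. intros. unfold qf. pose proof (HA i). apply V_le_id. nra. }
    rewrite sumL_scal in H. fold sA in H.
    assert (lo * (1 + sA) = 1/2) by (unfold lo; field; lra). nra. }
  assert (Pfhi : 1 < Pf T A hi).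
  { unfold Pf. unfold T. rewrite sumL_cons.
    assert (0 <= sumL T' (fun i => qf A i hi)).
    { apply sumL_nonneg. intros. pose proof (qf_bounds A HA i hi ltac:(unfold hi; lra)). lra. }
    assert (c <= qf A j hi).
    { unfold c, qf. pose proof (HA j). apply V_le. lra. unfold hi. nra. }
    unfold hi in *. lra. }
  destruct (Ranalysis5.IVT_interv (fun q => Pf T A q - 1) lo hi) as [z [Hz Ez]].
  - intros a Ha. apply continuity_pt_minus. apply Pf_cont; auto; lra. apply continuity_pt_const.
    intros u w; auto.
  - unfold hi; lra.
  - lra.
  - lra.
  - exists z. split. unfold hi in *; lra.
    unfold Pf in Ez. unfold qf, A, Ath in Ez. lra.
Qed.

Lemma q0_spec theta T : T <> nil ->
  0 < q0bar theta T < 1 /\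
  sumL T (fun i => Vfun (q0bar theta T * exp (theta i - 1))) = 1 - q0bar theta T.
Proof.
  intros HT. unfold q0bar.
  apply (epsilon_spec (inhabits 0) (fun q => 0 < q < 1 /\
      sumL T (fun i => Vfun (q * exp (theta i - 1))) = 1 - q)).
  apply q0_exists; auto.
Qed.

Lemma q0_Pf theta T : T <> nil -> Pf T (Ath theta) (q0bar theta T) = 1.
Proof.
  intros HT. destruct (q0_spec theta T HT) as [_ E]. unfold Pf, qf, Ath. lra.
Qed.

Lemma q0_unique theta T q : T <> nil -> 0 < q < 1 ->
  sumL T (fun i => Vfun (q * exp (theta i - 1))) = 1 - q -> q0bar theta T = q.
Proof.
  intros HT Hq E. destruct (q0_spec theta T HT) as [H1 E1].
  assert (HA : forall i, 0 < Ath theta i) by (intros; apply Ath_pos).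
  assert (P1 : Pf T (Ath theta) q = 1) by (unfold Pf, qf, Ath; lra).
  pose proof (q0_Pf theta T HT) as P2.
  destruct (Rtotal_order q (q0bar theta T)) as [L|[L|L]]; auto.
  - pose proof (Pf_lt T _ q (q0bar theta T) HA ltac:(lra) L). lra.
  - pose proof (Pf_lt T _ (q0bar theta T) q HA ltac:(lra) L). lra.
Qed.

Lemma q0_perm theta T T' : T <> nil -> Permutation T T' -> q0bar theta T' = q0bar theta T.
Proof.
  intros HT P. assert (HT' : T' <> nil).
  { intro; subst. apply Permutation_sym, Permutation_nil in P. congruence. }
  destruct (q0_spec theta T HT) as [H1 E1].
  apply q0_unique; auto. rewrite <- (sumL_perm T T'); auto.
Qed.

Lemma rebar_perm theta T T' : T <> nil -> Permutation T T' -> rebar theta T' = rebar theta T.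
Proof.
  intros HT P. unfold rebar, qbar. rewrite (q0_perm theta T T' HT P).
  symmetry. apply sumL_perm; auto.
Qed.

Lemma rebar_Gf theta S : S <> nil -> rebar theta S = Gf S (Ath theta) (q0bar theta S).
Proof.
  intros HS. unfold Gf. rewrite q0_Pf; auto.
  replace (gq (1 - 1)) with 0 by (unfold gq; field). rewrite Rplus_0_r.
  reflexivity.
Qed.

Lemma rebar_Gf_cons theta S j : rebar theta (j :: S) = Gf S (Ath theta) (q0bar theta (j :: S)).
Proof.
  assert (HT : j :: S <> nil) by congruence.
  destruct (q0_spec theta (j :: S) HT) as [H1 E1].
  unfold rebar, Gf. rewrite sumL_cons. rewrite Rplus_comm. f_equal.
  unfold Pf. rewrite sumL_cons in E1. unfold qbar, gq, qf, Ath. f_equal; f_equal; lra.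
Qed.
Lemma swap_better theta S j i : S <> nil ->
  (forall k, In k S -> qbar theta S k < 1/2) -> theta j <= theta i ->
  rebar theta S <= rebar theta (j :: S) -> rebar theta (j :: S) <= rebar theta (i :: S).
Proof.
  intros HS Hh Hth Hle.
  set (A := Ath theta). assert (HA : forall k, 0 < A k) by (intros; apply Ath_pos).
  set (X := q0bar theta S). set (xj := q0bar theta (j :: S)). set (xi := q0bar theta (i :: S)).
  destruct (q0_spec theta S HS) as [HX _].
  destruct (q0_spec theta (j :: S) ltac:(congruence)) as [Hxj Ej].
  destruct (q0_spec theta (i :: S) ltac:(congruence)) as [Hxi Ei].
  fold X in HX. fold xj in Hxj, Ej. fold xi in Hxi, Ei.
  rewrite sumL_cons in Ej, Ei.
  assert (PX : Pf S A X = 1) by (apply q0_Pf; auto).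
  assert (Pj : Pf S A xj = 1 - qf A j xj) by (unfold Pf, qf, A, Ath; lra).
  assert (Pi : Pf S A xi = 1 - qf A i xi) by (unfold Pf, qf, A, Ath; lra).
  assert (HjX : xj < X).
  { destruct (Rlt_or_le xj X) as [|L]; auto.
    pose proof (Pf_le S A X xj HA ltac:(lra) L).
    pose proof (qf_bounds A HA j xj ltac:(lra)). lra. }
  assert (Hij : xi <= xj).
  { destruct (Rle_or_lt xi xj) as [|L]; auto.
    pose proof (Pf_lt S A xj xi HA ltac:(lra) L).
    assert (qf A j xj <= qf A i xi).
    { unfold qf. apply V_le. pose proof (HA j); nra.
      assert (A j <= A i) by (unfold A, Ath; destruct (Req_dec (theta j) (theta i)) as [E|E];
        [rewrite E; lra| left; apply exp_increasing; lra]).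
      pose proof (HA j). nra. }
    lra. }
  rewrite (rebar_Gf_cons theta S j), (rebar_Gf_cons theta S i).
  rewrite (rebar_Gf_cons theta S j), (rebar_Gf theta S HS) in Hle.
  apply (key_analytic S A HA X xi xj); auto; try lra.
Qed.


Lemma theta_mono n theta : (forall i, (1 <= i < n)%nat -> theta (S i) <= theta i) ->
  forall i j, (1 <= i)%nat -> (i <= j)%nat -> (j <= n)%nat -> theta j <= theta i.
Proof.
  intros Hm i j Hi Hij Hjn. induction j as [|j IH].
  - lia.
  - destruct (Nat.eq_dec i (S j)) as [E|E]. subst; lra.
    assert (theta (S j) <= theta j) by (apply Hm; lia).
    assert (theta j <= theta i) by (apply IH; lia). lra.
Qed.

Lemma step n theta (Hhalf : forall T, nonempty_subset n T ->
             forall i, In i T -> qbar theta T i < 1 / 2)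
  l1 l2 j i :
  is_maximizer n theta (l1 ++ j :: l2) -> (2 <= length (l1 ++ j :: l2))%nat ->
  ~ In i (l1 ++ j :: l2) -> (1 <= i <= n)%nat -> theta j <= theta i ->
  is_maximizer n theta (i :: l1 ++ l2).
Proof.
  intros [[HN [Hne Hr]] Hopt] Hlen Hi Hin Hth.
  set (S := l1 ++ l2).
  assert (HNS : NoDup S) by (apply NoDup_remove_1 with j; auto).
  assert (HjS : ~ In j S) by (apply NoDup_remove_2; auto).
  assert (HSsub : forall k, In k S -> In k (l1 ++ j :: l2)).
  { intros k Hk. unfold S in Hk. apply in_app_or in Hk. apply in_or_app. simpl. tauto. }
  assert (HSne : S <> nil).
  { intro E. unfold S in E. apply app_eq_nil in E. destruct E; subst. simpl in Hlen. lia. }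
  assert (HSsubset : nonempty_subset n S).
  { split; [auto|split; [auto|]]. intros k Hk. apply Hr, HSsub; auto. }
  assert (Hperm : Permutation (j :: S) (l1 ++ j :: l2)) by apply Permutation_middle.
  assert (Hre : rebar theta (l1 ++ j :: l2) = rebar theta (j :: S))
    by (apply rebar_perm; [congruence| exact Hperm]).
  assert (Hsw : rebar theta (j :: S) <= rebar theta (i :: S)).
  { apply swap_better; [exact HSne | intros k Hk; apply Hhalf; auto | exact Hth |].
    rewrite <- Hre. apply Hopt; auto. }
  split.
  - split; [|split].
    + constructor; auto. intro H. apply Hi, HSsub; auto.
    + congruence.
    + intros k [Hk|Hk]; [subst; auto|]. apply Hr, HSsub; auto.
  - intros T' HT'. specialize (Hopt T' HT'). fold S. lra.
Qed.

Lemma main_ind n theta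
  (Hmono : forall i, (1 <= i < n)%nat -> theta (S i) <= theta i)
  (Hhalf : forall T, nonempty_subset n T -> forall i, In i T -> qbar theta T i < 1 / 2)
  (k : nat) (Hk : (2 <= k)%nat) :
  forall m T, (list_sum T < m)%nat -> is_maximizer n theta T -> length T = k ->
  is_maximizer n theta (seq 1 k).
Proof.
  induction m as [|m IH]; intros T Hm HT HL. lia.
  pose proof HT as [[HN [Hne Hr]] Hopt].
  assert (Hkn : (k <= n)%nat).
  { rewrite <- HL. rewrite <- (length_seq n 1). apply NoDup_incl_length; auto.
    intros x Hx. apply in_seq. specialize (Hr x Hx). lia. }
  destruct (classic (exists j, In j T /\ (k < j)%nat)) as [[j [HjT Hjk]]|Hno].
  - assert (exists i, In i (seq 1 k) /\ ~ In i T) as [i [Hik HiT]].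
    { apply NNPP. intro Hc.
      assert (Hinc : incl (j :: seq 1 k) T).
      { intros x [Hx|Hx]; [subst; auto|]. apply NNPP. intro Hx'. apply Hc. exists x; auto. }
      assert (HND : NoDup (j :: seq 1 k)).
      { constructor. rewrite in_seq. lia. apply seq_NoDup. }
      pose proof (NoDup_incl_length HND Hinc). simpl in H. rewrite length_seq in H. lia. }
    apply in_seq in Hik.
    destruct (in_split j T HjT) as [l1 [l2 E]]. subst T.
    apply (IH (i :: l1 ++ l2)).
    + rewrite list_sum_app in Hm. simpl in Hm. simpl. rewrite list_sum_app. lia.
    + apply (step n theta Hhalf l1 l2 j i); auto; try lia.
      apply (theta_mono n theta Hmono); try lia. apply Hr. apply in_or_app; simpl; auto.
    + rewrite length_app in HL. simpl in HL. simpl. rewrite length_app. lia.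
  - assert (Hinc : incl T (seq 1 k)).
    { intros x Hx. apply in_seq. specialize (Hr x Hx).
      destruct (le_lt_dec x k) as [|L]; [lia|]. exfalso. apply Hno. exists x; auto. }
    assert (Hp : Permutation T (seq 1 k)).
    { apply NoDup_Permutation_bis; auto. rewrite length_seq. lia. }
    split.
    + split; [apply seq_NoDup|split].
      * destruct k; [lia|]. simpl. congruence.
      * intros x Hx. apply in_seq in Hx. lia.
    + intros T' HT'. rewrite (rebar_perm theta T (seq 1 k)); auto.
Qed.

Theorem lemma6 (n : nat) (theta : nat -> R)
  (Hmono : forall i, (1 <= i < n)%nat -> theta (S i) <= theta i)
  (Hnn : 0 <= theta n)
  (Hhalf : forall T, nonempty_subset n T ->
             forall i, In i T -> qbar theta T i < 1 / 2)
  (Tstar : list nat)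
  (Hmax : is_maximizer n theta Tstar)
  (Hk : (2 <= length Tstar)%nat) :
  is_maximizer n theta (seq 1 (length Tstar)).
Proof.
  apply (main_ind n theta Hmono Hhalf (length Tstar) Hk (S (list_sum Tstar)) Tstar); auto.
Qed.
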